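(* Assume SIEVE$(S,k,i,r)$ returns $R\cap X^+$ with $R\sim\mathcal{U}(X)$ and $|X|=k$ (i.e. it returns after the while loop, once dummy elements have been added so that $|X|=k$, with $X^+=\{a\in X:\Delta(a,S,X)\ge0\}$). Then for any $T\subseteq X^+$, $$\mathbb{E}_{R\sim\mathcal{U}(X)}[f_S(R\cap X^+)]\ge f_S(T)/r.$$
   Context: $N$ is a ground set, $f:2^N\to\mathbb{R}_{\ge0}$ is non-negative submodular (not necessarily monotone), $k$ is a cardinality constraint, $\texttt{OPT}=\max_{|S|\le k} f(S)$, $r$ is such that $k/r$ is a positive integer. $f_S(T) = f(S\cup T)-f(S)$, $f_S(a) = f_S(\{a\})$. A dummy element $a$ satisfies $f_S(a)=0$ for all $S$. $\mathcal{U}(X)$ is the uniform distribution over subsets of $X$ of size exactly $k/r$, and $\Delta(a,S,X) := \mathbb{E}_{R\sim\mathcal{U}(X)}[f_{S\cup(R\setminus\{a\})}(a)]$. SIEVE$(S,k,i,r)$ (idealized, with parameter $\epsilon>0$, exact $\texttt{OPT}$ and exact expectations): $X\leftarrow N$, $t \leftarrow \frac{1-\epsilon/2}{2}((1-1/r)^{i-1}(1-\epsilon/2)\texttt{OPT} - f(S))$; while $|X|>k$: $X^+\leftarrow\{a\in X:\Delta(a,S,X)\ge0\}$; if $\mathbb{E}_{R\sim\mathcal{U}(X)}[f_S(R\cap X^+)]\ge t/r$ return $R\cap X^+$ with $R\sim\mathcal{U}(X)$; else $X\leftarrow\{a\in X:\Delta(a,S,X)\ge(1+\epsilon/4)t/k\}$.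 After the loop: add $k-|X|$ dummy elements to $X$, set $X^+\leftarrow\{a\in X:\Delta(a,S,X)\ge0\}$, return $R\cap X^+$ with $R\sim\mathcal{U}(X)$. *)

(* Defs.v *)
From mathcomp Require Import all_boot all_order all_algebra.
Set Implicit Arguments. Unset Strict Implicit. Unset Printing Implicit Defensive.
Import Order.TTheory GRing.Theory Num.Theory.
Local Open Scope ring_scope.

Section Defs.
Variables (R : realFieldType) (T : finType).

Definition nonneg_setfun (f : {set T} -> R) : Prop := forall A, 0 <= f A.

Definition submodular (f : {set T} -> R) : Prop :=
  forall A B : {set T}, f (A :|: B) + f (A :&: B) <= f A + f B.

Definition marg (f : {set T} -> R) (S A : {set T}) : R := f (S :|: A) - f S.

(* The support of U(X): subsets of X of size exactly s (s = k/r). *)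
Definition usets (X : {set T}) (s : nat) : {set {set T}} :=
  [set Rs : {set T} | (Rs \subset X) && (#|Rs| == s)].

Definition unif_exp (X : {set T}) (s : nat) (g : {set T} -> R) : R :=
  (\sum_(Rs in usets X s) g Rs) / (#|usets X s|)%:R.

Definition Delta (f : {set T} -> R) (S X : {set T}) (s : nat) (a : T) : R :=
  unif_exp X s (fun Rs => marg f (S :|: (Rs :\ a)) [set a]).

Definition Xplus (f : {set T} -> R) (S X : {set T}) (s : nat) : {set T} :=
  [set a in X | 0 <= Delta f S X s a].

End Defs.

(* Main.v *)
Require Import Defs.
From mathcomp Require Import all_boot all_order all_algebra.
From mathcomp Require Import ring lra.
Import Order.TTheory GRing.Theory Num.Theory.
Set Implicit Arguments. Unset Strict Implicit.
Local Open Scope ring_scope.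

Lemma DR (R : realFieldType) (T : finType) (f : {set T} -> R) :
  submodular f -> forall (A B : {set T}) a, A \subset B -> (a \in B -> a \in A) ->
  f (B :|: [set a]) - f B <= f (A :|: [set a]) - f A.
Proof.
move=> sub A B a AB hB.
case aA: (a \in A).
  have aB : a \in B by apply: (subsetP AB).
  rewrite (setUidPl _ : A :|: [set a] = A); last by rewrite sub1set.
  rewrite (setUidPl _ : B :|: [set a] = B); last by rewrite sub1set.
  by rewrite !subrr.
have aB : a \notin B by apply/negP => /hB; rewrite aA.
have := sub (A :|: [set a]) B.
have -> : (A :|: [set a]) :|: B = B :|: [set a].
  by rewrite setUAC (setUidPr AB) .
have -> : (A :|: [set a]) :&: B = A.
  apply/setP => x; rewrite !inE; case: (eqVneq x a) => [->|_].
    by rewrite aA (negbTE aB).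
  rewrite orbF; case xA: (x \in A) => //=; by rewrite (subsetP AB).
move=> h; lra.
Qed.

Lemma L1 (R : realFieldType) (T : finType) (f : {set T} -> R) :
  submodular f -> forall n (W Q : {set T}) (Y : T -> {set T}), #|Q| = n ->
  (forall q, q \in Q -> (W :|: (Q :\ q) \subset Y q) && ((q \in Y q) ==> (q \in W))) ->
  \sum_(q in Q) (f (Y q :|: [set q]) - f (Y q)) <= f (W :|: Q) - f W.
Proof.
move=> sub; elim=> [|n IH] W Q Y hn hY.
  move/eqP: hn; rewrite cards_eq0 => /eqP ->.
  by rewrite big_set0 setU0 subrr.
have : (0 < #|Q|)%N by rewrite hn.
case/card_gt0P => q qQ.
rewrite (big_setD1 q) //=.
have hn' : #|Q :\ q| = n.
  by move: hn; rewrite (cardsD1 q Q) qQ add1n => -[].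
have IH' := IH W (Q :\ q) Y hn'.
have h1 : \sum_(i in Q :\ q) (f (Y i :|: [set i]) - f (Y i)) <= f (W :|: (Q :\ q)) - f W.
  apply: IH' => q' /setD1P [q'q q'Q].
  case/andP: (hY q' q'Q) => hs ->; rewrite andbT.
  apply: subset_trans hs; apply: setUS.
  by apply/subsetP => x; rewrite !inE => /and3P [-> _ ->].
case/andP: (hY q qQ) => hs /implyP hq.
have h2 := DR sub hs (fun h => (subsetP (subsetUl W (Q :\ q))) q (hq h)).
have -> : W :|: Q = (W :|: Q :\ q) :|: [set q].
  by rewrite -setUA [Q :\ q :|: _]setUC setD1K.
lra.
Qed.

Definition sw (T : finType) (a b : T) x := if x == a then b else if x == b then a else x.

Lemma swK (T : finType) (a b : T) : involutive (sw a b).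
Proof.
move=> x; rewrite /sw.
case: (eqVneq x a) => [->|xa].
  by case: (eqVneq b a) => [->|ba]; rewrite ?eqxx.
case: (eqVneq x b) => [->|xb]; rewrite ?eqxx ?(negbTE xa) //.
by rewrite (negbTE xb).
Qed.

Definition phi (T : finType) (a b : T) (Rs : {set T}) := [set x | sw a b x \in Rs].

Lemma phiK (T : finType) (a b : T) : involutive (phi a b).
Proof. by move=> Rs; apply/setP => x; rewrite !inE swK. Qed.

Lemma card_phi (T : finType) (a b : T) (Rs : {set T}) : #|phi a b Rs| = #|Rs|.
Proof. exact: (card_preimset Rs (can_inj (swK a b))). Qed.

Lemma phi_sub (T : finType) (a b : T) (X Rs : {set T}) : a \in X -> b \in X ->
  Rs \subset X -> phi a b Rs \subset X.
Proof.
move=> aX bX RX; apply/subsetP => x; rewrite inE /sw.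
case: (eqVneq x a) => [->//|xa]; case: (eqVneq x b) => [->//|xb].
exact: (subsetP RX).
Qed.

Lemma phiU (T : finType) (a b : T) (X Rs : {set T}) s : a \in X -> b \in X ->
  (phi a b Rs \in usets X s) = (Rs \in usets X s).
Proof.
move=> aX bX; rewrite !inE card_phi.
case RX: (Rs \subset X); first by rewrite (phi_sub aX bX RX).
case PX: (phi a b Rs \subset X) => //.
by move: (phi_sub aX bX PX); rewrite phiK RX.
Qed.

Lemma mem_phiL (T : finType) (a b : T) (Rs : {set T}) : (a \in phi a b Rs) = (b \in Rs).
Proof. by rewrite inE /sw eqxx. Qed.

Lemma mem_phiR (T : finType) (a b : T) (Rs : {set T}) : (b \in phi a b Rs) = (a \in Rs).
Proof.
rewrite inE /sw eqxx; case: (eqVneq b a) => [->//|]; done.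
Qed.

Lemma cnt_const (R : realFieldType) (T : finType) (X : {set T}) s a b :
  a \in X -> b \in X ->
  \sum_(Rs in usets X s | a \in Rs) (1 : R) = \sum_(Rs in usets X s | b \in Rs) 1.
Proof.
move=> aX bX.
rewrite (reindex_inj (can_inj (phiK a b))) /=.
apply: eq_bigl => Rs; by rewrite phiU // mem_phiL.
Qed.

Lemma swap_sum (R : realFieldType) (T : finType) (F : {set T} -> R) (X : {set T}) s a b :
  a \in X -> b \in X -> b != a ->
  \sum_(Rs in usets X s | (a \notin Rs) && (b \in Rs)) F (Rs :\ b) =
  \sum_(Rs in usets X s | (a \in Rs) && (b \in X :\: Rs)) F (Rs :\ a).
Proof.
move=> aX bX ba.
rewrite [RHS](reindex_inj (can_inj (phiK a b))) /=.
apply: eq_big => Rs.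
  rewrite phiU // mem_phiL !inE /sw (negbTE ba) eqxx bX andbT.
  by case: (Rs \subset X); case: (#|Rs| == s); case: (a \in Rs); case: (b \in Rs).
case/and3P => _ aR bR; congr F.
apply/setP => x; rewrite !inE /sw.
case: (eqVneq x a) => [->|xa] /=; first by rewrite (negbTE aR) andbF.
case: (eqVneq x b) => [->|xb] //=.
by rewrite (negbTE aR).
Qed.

Lemma stepB (R : realFieldType) (T : finType) (f : {set T} -> R) (S X : {set T}) s a :
  submodular f -> a \in X -> (0 < s)%N -> (s <= #|X|)%N ->
  0 <= \sum_(Rs in usets X s) marg f (S :|: (Rs :\ a)) [set a] ->
  0 <= \sum_(Rs in usets X s | a \in Rs) marg f (S :|: (Rs :\ a)) [set a].
Proof.
move=> sub aX s0 sX.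
set U := usets X s.
set H := fun B => marg f (S :|: B) [set a].
move=> htot.
rewrite (bigID (fun Rs : {set T} => a \in Rs)) /= in htot.
set In := \sum_(Rs in U | a \in Rs) _ in htot *.
set Out := \sum_(Rs in U | a \notin Rs) _ in htot.
have C1 : s%:R * Out <= \sum_(Rs in U | a \notin Rs) \sum_(b in Rs) H (Rs :\ b).
  rewrite /Out mulr_sumr; apply: ler_sum => Rs /andP [RU aR].
  have cR : #|Rs| = s by move: RU; rewrite inE => /andP [_ /eqP].
  have -> : s%:R * marg f (S :|: Rs :\ a) [set a] = \sum_(b in Rs) H (Rs :\ a).
    by rewrite sumr_const cR mulr_natl.
  apply: ler_sum => b bR; rewrite /H /marg; apply: DR => //.
    apply: setUS; apply/subsetP => x; rewrite !inE => /andP [_ xR]; rewrite xR.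
    rewrite andbT; apply/negP => /eqP xa; move: aR; rewrite -xa; by rewrite xR.
  rewrite !inE => /orP [->//|/andP [/eqP //]].
have C3 : \sum_(Rs in U | a \in Rs) \sum_(x in X :\: Rs) H (Rs :\ a) = (#|X| - s)%:R * In.
  rewrite /In mulr_sumr; apply: eq_bigr => Rs /andP [RU aR].
  have /andP [RX /eqP cR] : (Rs \subset X) && (#|Rs| == s) by move: RU; rewrite inE.
  by rewrite sumr_const cardsD (setIidPr RX) cR mulr_natl.
have C2 : \sum_(Rs in U | a \notin Rs) \sum_(b in Rs) H (Rs :\ b) =
          \sum_(Rs in U | a \in Rs) \sum_(x in X :\: Rs) H (Rs :\ a).
  rewrite (exchange_big_dep predT) //= [RHS](exchange_big_dep predT) //=.
  apply: eq_bigr => b _.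
  case: (eqVneq b a) => [->|ba].
    rewrite big1; last by move=> Rs /andP [/andP [_ /negbTE ->]].
    by rewrite big1 // => Rs /andP [/andP [_ aR]]; rewrite inE aR.
  case bX: (b \in X); last first.
    rewrite big1; last first.
      move=> Rs /andP [/andP [RU _] bR]; move: RU; rewrite inE => /andP [RX _].
      by move: bX; rewrite (subsetP RX).
    by rewrite big1 // => Rs /andP [_]; rewrite inE bX andbF.
  rewrite (eq_bigl (fun Rs => (Rs \in U) && ((a \notin Rs) && (b \in Rs)))); last first.
    by move=> Rs; rewrite andbA.
  rewrite [RHS](eq_bigl (fun Rs => (Rs \in U) && ((a \in Rs) && (b \in X :\: Rs)))); last first.
    by move=> Rs; rewrite andbA.
  exact: swap_sum.
have kpos : 0 < (#|X|)%:R :> R by rewrite ltr0n; apply: leq_trans sX.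
have spos : 0 < s%:R :> R by rewrite ltr0n.
have h1 : s%:R * Out <= (#|X|%:R - s%:R) * In by rewrite -natrB // -C3 -C2.
have h2 : 0 <= s%:R * (In + Out) by apply: mulr_ge0 => //; apply: ltW.
have h3 : 0 <= #|X|%:R * In :> R.
  have -> : #|X|%:R * In = s%:R * (In + Out) + ((#|X|%:R - s%:R) * In - s%:R * Out) :> R by ring.
  by apply: addr_ge0 => //; rewrite subr_ge0.
by rewrite (pmulr_rge0 _ kpos) in h3.
Qed.

Lemma setE1 (T : finType) (S A B : {set T}) t : t \in B -> t \in A ->
  S :|: (A :&: B) = (S :|: (A :&: (B :\ t))) :|: [set t].
Proof.
move=> tB tA; apply/setP => x; rewrite !inE.
case: (eqVneq x t) => [->|xt]; first by rewrite tB tA !orbT.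
by rewrite orbF.
Qed.

Lemma setE2 (T : finType) (A B : {set T}) t : t \notin A ->
  A :&: B = A :&: (B :\ t).
Proof.
move=> tA; apply/setP => x; rewrite !inE.
case: (eqVneq x t) => [->|xt] //=; by rewrite (negbTE tA).
Qed.

Lemma stepC (R : realFieldType) (T : finType) (f : {set T} -> R) (S X : {set T}) s (M : R) :
  submodular f ->
  (forall x, x \in X -> \sum_(Rs in usets X s | x \in Rs) (1 : R) = M) ->
  forall n (Tset : {set T}), #|Tset| = n -> Tset \subset X ->
  M * (f (S :|: Tset) - f S) <= \sum_(Rs in usets X s) (f (S :|: (Rs :&: Tset)) - f S).
Proof.
move=> sub hM; elim=> [|n IH] Tset hn TX.
  move/eqP: hn; rewrite cards_eq0 => /eqP ->.
  rewrite setU0 subrr mulr0 big1 // => Rs _; by rewrite setI0 setU0 subrr.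
have : (0 < #|Tset|)%N by rewrite hn.
case/card_gt0P => t tT.
have hn' : #|Tset :\ t| = n.
  by move: hn; rewrite (cardsD1 t Tset) tT add1n => -[].
have IH' := IH (Tset :\ t) hn' (subset_trans (subD1set Tset t) TX).
set d := f (S :|: Tset) - f (S :|: Tset :\ t).
have E : \sum_(Rs in usets X s) (f (S :|: (Rs :&: Tset)) - f S) =
   \sum_(Rs in usets X s) (f (S :|: (Rs :&: (Tset :\ t))) - f S) +
   \sum_(Rs in usets X s) (f (S :|: (Rs :&: Tset)) - f (S :|: (Rs :&: (Tset :\ t)))).
  rewrite -big_split /=; apply: eq_bigr => Rs _; ring.
have D : d * M <= \sum_(Rs in usets X s) (f (S :|: (Rs :&: Tset)) - f (S :|: (Rs :&: (Tset :\ t)))).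
  rewrite (bigID (fun Rs : {set T} => t \in Rs)) /=.
  rewrite [X in _ + X]big1; last first.
    by move=> Rs /andP [_ tR]; rewrite -setE2 // subrr.
  rewrite addr0 -(hM t (subsetP TX t tT)) mulr_sumr.
  apply: ler_sum => Rs /andP [_ tR]; rewrite mulr1 /d.
  rewrite (setE1 S tT tR).
  have -> : S :|: Tset = (S :|: Tset :\ t) :|: [set t].
    apply/setP => x; rewrite !inE.
    case: (eqVneq x t) => [->|xt]; first by rewrite tT !orbT.
    by rewrite orbF.
  apply: DR => //.
    by apply: setUS; apply: subsetIr.
  rewrite !inE eqxx /= => /orP [->//|]; by rewrite andbF.
rewrite E.
have -> : M * (f (S :|: Tset) - f S) = M * (f (S :|: Tset :\ t) - f S) + d * M by rewrite /d; ring.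
exact: lerD.
Qed.

Unset Implicit Arguments. Set Strict Implicit.
Theorem lemma7 (R : realFieldType) (T : finType) (f : {set T} -> R)
    (k s : nat) (r : R) (S X Tset : {set T}) :
  nonneg_setfun f -> submodular f ->
  (1 <= r) -> (0 < s)%N -> k%:R / r = s%:R ->
  #|X| = k ->
  Tset \subset Xplus f S X s ->
  marg f S Tset / r <= unif_exp X s (fun Rs => marg f S (Rs :&: Xplus f S X s)).
Proof.
move=> _ sub r1 s0 hk cX TXp.
set Xp := Xplus f S X s.
set U := usets X s.
have r0 : 0 < r by apply: lt_le_trans r1.
have hk' : k%:R = s%:R * r :> R by rewrite -hk divfK // gt_eqF.
have sk : (s <= k)%N.
  rewrite -(ler_nat R) hk' -{1}(mulr1 s%:R).
  by apply: ler_wpM2l => //; rewrite ler0n.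
have k0 : (0 < k)%N by apply: leq_trans sk.
have XpX : Xp \subset X by apply/subsetP => x; rewrite inE => /andP [].
have TX : Tset \subset X by apply: subset_trans XpX.
have cU : #|U| = 'C(k, s) by rewrite /U /usets cards_draws cX.
have N0 : (0 < #|U|)%N by rewrite cU bin_gt0.
have : (0 < #|X|)%N by rewrite cX.
case/card_gt0P => x0 x0X.
set M := \sum_(Rs in U | x0 \in Rs) (1 : R).
have hM : forall x, x \in X -> \sum_(Rs in U | x \in Rs) (1 : R) = M.
  by move=> x xX; rewrite /M (@cnt_const R T X s x x0 xX x0X).
have kM : k%:R * M = #|U|%:R * s%:R.
  transitivity (\sum_(x in X) \sum_(Rs in U | x \in Rs) (1 : R)).
    by rewrite -cX mulr_natl -sumr_const; apply: eq_bigr => x xX; rewrite hM.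
  rewrite (exchange_big_dep (fun Rs => Rs \in U)) /=; last by move=> x Rs _ /andP [].
  rewrite [RHS]mulr_natl -sumr_const.
  apply: eq_bigr => Rs RU.
  have /andP [RX /eqP cR] : (Rs \subset X) && (#|Rs| == s) by move: RU; rewrite inE.
  rewrite (eq_bigl (fun x => x \in Rs)); first by rewrite sumr_const cR.
  move=> x /=; rewrite RU /=; case xR: (x \in Rs); last by rewrite andbF.
  by rewrite (subsetP RX).
set G := fun Rs : {set T} => marg f S (Rs :&: Xp).
set Hq := fun (Rs : {set T}) q => f ((S :|: (Rs :\ q)) :|: [set q]) - f (S :|: (Rs :\ q)).
have SA : forall Rs, (f (S :|: (Rs :&: Tset)) - f S) +
    \sum_(q in Rs :&: (Xp :\: Tset)) Hq Rs q <= G Rs.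
  move=> Rs.
  have := L1 sub (erefl #|Rs :&: (Xp :\: Tset)|) (W := S :|: (Rs :&: Tset))
     (Y := fun q => S :|: (Rs :\ q)).
  have -> : (S :|: Rs :&: Tset) :|: (Rs :&: (Xp :\: Tset)) = S :|: (Rs :&: Xp).
    apply/setP => x; rewrite !(in_setU, in_setI, in_setD).
    have := subsetP TXp x.
    case: (x \in Tset) => [/(_ isT) ->|_]; by case: (x \in S); case: (x \in Rs); try case: (x \in Xp).
  move=> h.
  rewrite /G /marg.
  suff : \sum_(q in Rs :&: (Xp :\: Tset)) Hq Rs q <= f (S :|: Rs :&: Xp) - f (S :|: Rs :&: Tset) by lra.
  apply: h => q; rewrite !inE => /and3P [qR qT qXp].
  apply/andP; split.
    apply/subsetP => x; rewrite !inE.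
    case: (x \in S) => //=.
    case: (eqVneq x q) => [->|xq] /=; first by rewrite (negbTE qT) andbF.
    by case/orP => /andP [->].
  by rewrite eqxx /= orbF; apply/implyP => ->.
have SB : 0 <= \sum_(Rs in U) \sum_(q in Rs :&: (Xp :\: Tset)) Hq Rs q.
  rewrite (exchange_big_dep predT) //=; apply: sumr_ge0 => q _.
  case qin: (q \in Xp :\: Tset); last first.
    by rewrite big1 // => Rs /andP [_]; rewrite in_setI qin andbF.
  rewrite (eq_bigl (fun Rs => (Rs \in U) && (q \in Rs))); last first.
    by move=> Rs; rewrite in_setI qin andbT.
  have qXp : q \in Xp by move: qin; rewrite in_setD => /andP [].
  have qX : q \in X by apply: (subsetP XpX).
  have hD : 0 <= Delta f S X s q by move: qXp; rewrite inE => /andP [].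
  apply: (stepB sub qX s0); first by rewrite cX.
  move: hD; rewrite /Delta /unif_exp => hD.
  have := mulr_ge0 hD (ler0n R #|usets X s|).
  by rewrite divfK // pnatr_eq0 -lt0n.
have SC := stepC S sub hM (erefl #|Tset|) TX.
have Sum : M * marg f S Tset <= \sum_(Rs in U) G Rs.
  apply: le_trans SC _.
  apply: le_trans (ler_sum _ (fun Rs _ => SA Rs)).
  rewrite [X in _ <= X](_ : _ = \sum_(Rs in U) (f (S :|: Rs :&: Tset) - f S) +
     \sum_(Rs in U) \sum_(q in Rs :&: (Xp :\: Tset)) Hq Rs q); last by rewrite big_split.
  by rewrite lerDl.
rewrite /unif_exp -/U -/G.
have Npos : 0 < #|U|%:R :> R by rewrite ltr0n.
have sne : s%:R != 0 :> R by rewrite pnatr_eq0 -lt0n.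
have kne : k%:R != 0 :> R by rewrite pnatr_eq0 -lt0n.
have Nne : #|U|%:R != 0 :> R by rewrite pnatr_eq0 -lt0n.
have hr : r = k%:R / s%:R by rewrite hk'; field.
have hM' : M = #|U|%:R * s%:R / k%:R by rewrite -kM; field.
have -> : marg f S Tset / r = (M * marg f S Tset) / #|U|%:R.
  by rewrite hM' hr; field; rewrite sne kne Nne.
by apply: ler_wpM2r => //; rewrite invr_ge0 ltW.
Qed.
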